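(* Let $s>0$ and let $(V_s,\oplus,\otimes)$ be the Möbius gyrovector space on the open disc $V_s=\{z\in\mathbb{C}:|z|<s\}$. Let $A,B,C,D\in V_s$ be the vertices of a gyroquadrilateral $ABCD$. Let $l$ be a gyroline passing through none of the points $A,B,C,D$, such that $l$ meets the gyroline $AB$ at $X$, the gyroline $BC$ at $Y$, the gyroline $CD$ at $Z$, and the gyroline $DA$ at $W$. Then $$\frac{(AX)_\gamma}{(BX)_\gamma}\cdot\frac{(BY)_\gamma}{(CY)_\gamma}\cdot\frac{(CZ)_\gamma}{(DZ)_\gamma}\cdot\frac{(DW)_\gamma}{(AW)_\gamma}=1.$$
   Context: Möbius addition on $V_s$ is $a\oplus b=\dfrac{a+b}{1+\bar a b/s^2}$, with $\ominus a=-a$ and $a\ominus b=a\oplus(-b)$; for $s=1$ this is the Poincaré disc model of hyperbolic geometry. For points $P,Q\in V_s$, the gyrolength (hyperbolic gyrodistance) $PQ$ is $|\ominus P\oplus Q|$. Gyrolines are the geodesics of the Poincaré disc model, i.e. the sets $\{A\oplus(\ominus A\oplus B)\otimes t: t\in\mathbb{R}\}$ for distinct $A,B$ (the gyroline $AB$); equivalently, diameters of the disc and circular arcs in the disc orthogonal to its boundary. For a gyrolength $v\in(-s,s)$, the notation $v_\gamma$ means $v_\gamma=\dfrac{v}{1-\frac{v^2}{s^2}}$; thus e.g. $(AX)_\gamma$ is this quantity for $v$ the gyrolength $AX$. *)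

(* Defs.v *)
From Stdlib Require Import Reals.
From Coquelicot Require Import Coquelicot.
Open Scope R_scope.

Definition tanh (x : R) : R := (exp x - exp (- x)) / (exp x + exp (- x)).
Definition artanh (y : R) : R := ln ((1 + y) / (1 - y)) / 2.

Definition in_Vs (s : R) (z : C) : Prop := Cmod z < s.

Definition madd (s : R) (a b : C) : C :=
  Cdiv (Cplus a b) (Cplus (RtoC 1) (Cdiv (Cmult (Cconj a) b) (RtoC (s ^ 2)))).

Definition mopp (a : C) : C := Copp a.

Definition mscal (s : R) (r : R) (a : C) : C :=
  if Req_EM_T (Cmod a) 0 then RtoC 0
  else Cmult (RtoC (s * tanh (r * artanh (Cmod a / s)) / Cmod a)) a.

Definition gyroline (s : R) (A B : C) : C -> Prop :=
  fun P => exists t : R, P = madd s A (mscal s t (madd s (mopp A) B)).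

Definition gyrolength (s : R) (P Q : C) : R := Cmod (madd s (mopp P) Q).

Definition vgamma (s v : R) : R := v / (1 - v ^ 2 / s ^ 2).

Definition gyrocollinear (s : R) (P Q T : C) : Prop :=
  exists U V : C, in_Vs s U /\ in_Vs s V /\ U <> V /\
    gyroline s U V P /\ gyroline s U V Q /\ gyroline s U V T.

Definition gyroquadrilateral (s : R) (A B C D : C) : Prop :=
  in_Vs s A /\ in_Vs s B /\ in_Vs s C /\ in_Vs s D /\
  ~ gyrocollinear s A B C /\ ~ gyrocollinear s B C D /\
  ~ gyrocollinear s C D A /\ ~ gyrocollinear s D A B.

(* Main.v *)
Require Import Defs.
From Stdlib Require Import Reals Lra Psatz.
From Coquelicot Require Import Coquelicot.
Open Scope R_scope.


Lemma madd_eq s a1 a2 v1 v2 :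
  s <> 0 -> (s^2 + (a1*v1+a2*v2))^2 + (a1*v2-a2*v1)^2 <> 0 ->
  madd s (a1,a2) (v1,v2) =
  (s^2*((a1+v1)*(s^2+(a1*v1+a2*v2))+(a2+v2)*(a1*v2-a2*v1)) /
      ((s^2 + (a1*v1+a2*v2))^2 + (a1*v2-a2*v1)^2),
   s^2*((a2+v2)*(s^2+(a1*v1+a2*v2))-(a1+v1)*(a1*v2-a2*v1)) /
      ((s^2 + (a1*v1+a2*v2))^2 + (a1*v2-a2*v1)^2)).
Proof.
  intros Hs HD.
  unfold madd, Cdiv, Cinv, Cmult, Cplus, Cconj, RtoC; cbn [fst snd].
  set (k := a1*v1+a2*v2) in *. set (m := a1*v2-a2*v1) in *.
  replace ((a1 * v1 - - a2 * v2) * (s ^ 2 / ((s ^ 2) ^ 2 + 0 ^ 2)) -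
      (a1 * v2 + - a2 * v1) * (- 0 / ((s ^ 2) ^ 2 + 0 ^ 2))) with (k/s^2) by (unfold k; field; auto).
  replace ((a1 * v1 - - a2 * v2) * (- 0 / ((s ^ 2) ^ 2 + 0 ^ 2)) +
      (a1 * v2 + - a2 * v1) * (s ^ 2 / ((s ^ 2) ^ 2 + 0 ^ 2))) with (m/s^2) by (unfold m; field; auto).
  replace (0 + m/s^2) with (m/s^2) by ring.
  assert (E : (1 + k/s^2)^2 + (m/s^2)^2 = ((s^2+k)^2+m^2)/s^4) by (field; auto).
  rewrite E.
  f_equal; field; split; auto.
Qed.


Definition V3 := (R*R*R)%type.
Definition hv s (P:C) : V3 := (2*s*fst P, 2*s*snd P, s^2 + fst P^2 + snd P^2).
Definition vlin a (x:V3) b (y:V3) : V3 :=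
  (a*fst(fst x)+b*fst(fst y), a*snd(fst x)+b*snd(fst y), a*snd x+b*snd y).
Definition vsc a (x:V3) : V3 := (a*fst(fst x), a*snd(fst x), a*snd x).
Definition LA s (A:C) (x:V3) : V3 :=
  let a1 := fst A in let a2 := snd A in
  let x1 := fst (fst x) in let x2 := snd (fst x) in let x3 := snd x in
  (2*s*a1*x3 + s^2*x1 + (a1^2-a2^2)*x1 + 2*a1*a2*x2,
   2*s*a2*x3 + s^2*x2 + 2*a1*a2*x1 - (a1^2-a2^2)*x2,
   (s^2+a1^2+a2^2)*x3 + 2*s*(a1*x1+a2*x2)).
Definition Dm s (A v : C) : R :=
  (s^2 + (fst A*fst v+snd A*snd v))^2 + (fst A*snd v-snd A*fst v)^2.
Definition n2 (P:C) := fst P^2 + snd P^2.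

Lemma in_Vs_iff s P : 0 < s -> (in_Vs s P <-> n2 P < s^2).
Proof.
  intros Hs. unfold in_Vs, Cmod, n2. split; intro H.
  - assert (H0 : 0 <= fst P ^ 2 + snd P ^ 2) by nra.
    pose proof (sqrt_sqrt _ H0). pose proof (sqrt_pos (fst P ^ 2 + snd P ^ 2)). nra.
  - rewrite <- (sqrt_pow2 s) by lra. apply sqrt_lt_1_alt. nra.
Qed.

Lemma Dm_pos s A v : 0 < s -> n2 A < s^2 -> n2 v < s^2 -> 0 < Dm s A v.
Proof.
  destruct A as [a1 a2], v as [v1 v2]; unfold n2, Dm; cbn [fst snd]; intros.
  assert (0 < s^2 + (a1*v1+a2*v2)) by (pose proof (pow2_ge_0 (a1+v1)); pose proof (pow2_ge_0 (a2+v2)); nra). pose proof (pow2_ge_0 (a1*v2-a2*v1)). assert (0 < (s^2 + (a1*v1+a2*v2))^2) by (apply pow_lt; lra). lra.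
Qed.

Lemma madd_n2 s A v : 0 < s -> n2 A < s^2 -> n2 v < s^2 ->
  s^2 - n2 (madd s A v) = s^2 * (s^2 - n2 A) * (s^2 - n2 v) / Dm s A v.
Proof.
  intros Hs HA Hv. pose proof (Dm_pos s A v Hs HA Hv) as HD.
  destruct A as [a1 a2], v as [v1 v2]; unfold n2, Dm in *; cbn [fst snd] in *.
  rewrite madd_eq by (apply Rgt_not_eq; lra). cbn [fst snd]. field; apply Rgt_not_eq; lra.
Qed.

Lemma madd_in s A v : 0 < s -> n2 A < s^2 -> n2 v < s^2 -> n2 (madd s A v) < s^2.
Proof.
  intros Hs HA Hv. pose proof (madd_n2 s A v Hs HA Hv). pose proof (Dm_pos s A v Hs HA Hv).
  assert (0 < s^2 * (s^2 - n2 A) * (s^2 - n2 v) / Dm s A v).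
  { apply Rdiv_lt_0_compat; auto. apply Rmult_lt_0_compat; [apply Rmult_lt_0_compat|]; nra. }
  lra.
Qed.

Lemma transl s A v : 0 < s -> n2 A < s^2 -> n2 v < s^2 ->
  vsc (Dm s A v / s^2) (hv s (madd s A v)) = LA s A (hv s v).
Proof.
  intros Hs HA Hv. pose proof (Dm_pos s A v Hs HA Hv) as HD.
  destruct A as [a1 a2], v as [v1 v2]; unfold n2, Dm in *; cbn [fst snd] in *.
  rewrite madd_eq by (apply Rgt_not_eq; lra). unfold vsc, hv, LA; cbn [fst snd].
  f_equal; [f_equal|]; field; lra.
Qed.


Ltac v3 x := destruct x as [[? ?] ?].
Ltac vsimp := unfold vlin, vsc, LA, hv, n2 in *; cbn [fst snd] in *.

Lemma LA_lin s A a x b y : LA s A (vlin a x b y) = vlin a (LA s A x) b (LA s A y).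
Proof. v3 x; v3 y; destruct A; vsimp; f_equal; [f_equal|]; ring. Qed.
Lemma LA_vsc s A c x : LA s A (vsc c x) = vsc c (LA s A x).
Proof. v3 x; destruct A; vsimp; f_equal; [f_equal|]; ring. Qed.
Lemma vlin_vsc a c x b d y : vlin a (vsc c x) b (vsc d y) = vlin (a*c) x (b*d) y.
Proof. v3 x; v3 y; vsimp; f_equal; [f_equal|]; ring. Qed.
Lemma vsc_vlin c a x b y : vsc c (vlin a x b y) = vlin (c*a) x (c*b) y.
Proof. v3 x; v3 y; vsimp; f_equal; [f_equal|]; ring. Qed.
Lemma vsc_vsc c d x : vsc c (vsc d x) = vsc (c*d) x.
Proof. v3 x; vsimp; f_equal; [f_equal|]; ring. Qed.
Lemma vsc_inv c x y : c <> 0 -> vsc c x = y -> x = vsc (/c) y.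
Proof. intros Hc <-. v3 x; vsimp; f_equal; [f_equal|]; field; auto. Qed.
Lemma LA_h0 s A : LA s A (hv s (0,0)) = vsc (s^2) (hv s A).
Proof. destruct A; vsimp; f_equal; [f_equal|]; ring. Qed.
Lemma LA_inv s A x : LA s A (LA s (Copp A) x) = vsc ((s^2 - n2 A)^2) x.
Proof. v3 x; destruct A; unfold Copp; vsimp; f_equal; [f_equal|]; ring. Qed.
Lemma LA_inv' s A x : LA s (Copp A) (LA s A x) = vsc ((s^2 - n2 A)^2) x.
Proof. v3 x; destruct A; unfold Copp; vsimp; f_equal; [f_equal|]; ring. Qed.
Lemma n2_opp A : n2 (Copp A) = n2 A.
Proof. destruct A; unfold Copp, n2; cbn [fst snd]; ring. Qed.

Definition mk (x y : V3) := fst (fst x) * fst (fst y) + snd (fst x) * snd (fst y) - snd x * snd y.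
Definition G (x y : V3) := mk x y ^ 2 - mk x x * mk y y.

Lemma G_sym x y : G x y = G y x.
Proof. v3 x; v3 y; unfold G, mk; cbn [fst snd]; ring. Qed.
Lemma G_lin_r x a b y : G x (vlin a x b y) = b^2 * G x y.
Proof. v3 x; v3 y; unfold G, mk; vsimp; ring. Qed.
Lemma G_lin_l x a b y : G y (vlin a x b y) = a^2 * G x y.
Proof. v3 x; v3 y; unfold G, mk; vsimp; ring. Qed.

Lemma G_h s P Q : G (hv s P) (hv s Q) =
  4 * s^2 * ((fst Q - fst P)^2 + (snd Q - snd P)^2) *
  ((s^2 - (fst P * fst Q + snd P * snd Q))^2 + (fst P * snd Q - snd P * fst Q)^2).
Proof. destruct P, Q; unfold G, mk; vsimp; ring. Qed.

Lemma hv_inj s P Q mu : 0 < s -> n2 P < s^2 -> n2 Q < s^2 ->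
  hv s Q = vsc mu (hv s P) -> Q = P.
Proof.
  intros Hs HP HQ E. destruct P as [p1 p2], Q as [q1 q2]. vsimp.
  injection E as E1 E2 E3.
  assert (q1 = mu * p1) by (apply (Rmult_eq_reg_l (2*s)); [lra | nra]).
  assert (q2 = mu * p2) by (apply (Rmult_eq_reg_l (2*s)); [lra | nra]).
  subst q1 q2.
  assert (F : (mu - 1) * (mu * (p1^2+p2^2) - s^2) = 0) by nra.
  apply Rmult_integral in F. destruct F as [F|F].
  - assert (mu = 1) by lra. subst mu. f_equal; ring.
  - exfalso.
    assert (0 < p1^2+p2^2) by (assert (0 < s^2) by nra; nra).
    assert (1 < mu) by nra. nra.
Qed.


Lemma cancel_l s A B : 0 < s -> n2 A < s^2 -> n2 B < s^2 ->
  madd s A (madd s (mopp A) B) = B.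
Proof.
  intros Hs HA HB. unfold mopp.
  assert (HA' : n2 (Copp A) < s^2) by (rewrite n2_opp; auto).
  set (u := madd s (Copp A) B).
  assert (Hu : n2 u < s^2) by (apply madd_in; auto).
  pose proof (transl s A u Hs HA Hu) as T1.
  pose proof (transl s (Copp A) B Hs HA' HB) as T2.
  pose proof (Dm_pos s A u Hs HA Hu) as D1.
  pose proof (Dm_pos s (Copp A) B Hs HA' HB) as D2.
  apply vsc_inv in T2; [|apply Rgt_not_eq; apply Rdiv_lt_0_compat; nra].
  fold u in T2. rewrite T2, LA_vsc, LA_inv in T1.
  rewrite vsc_vsc in T1.
  apply vsc_inv in T1; [|apply Rgt_not_eq; apply Rdiv_lt_0_compat; nra].
  rewrite vsc_vsc in T1.
  exact (hv_inj s B (madd s A u) _ Hs HB (madd_in s A u Hs HA Hu) T1).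
Qed.

Lemma Cmod_sq P : Cmod P ^ 2 = n2 P.
Proof.
  unfold Cmod, n2. rewrite pow2_sqrt; auto. nra.
Qed.

Lemma diff_pos P Q : P <> Q -> 0 < (fst Q - fst P)^2 + (snd Q - snd P)^2.
Proof.
  intros H. destruct P as [p1 p2], Q as [q1 q2]; cbn [fst snd].
  destruct (Req_dec p1 q1) as [->|H1].
  - destruct (Req_dec p2 q2) as [->|H2]; [congruence|].
    assert (0 < (q2 - p2)^2) by (assert (q2 - p2 <> 0) by lra; apply Rsqr_pos_lt in H0; unfold Rsqr in H0; nra).
    nra.
  - assert (0 < (q1 - p1)^2) by (assert (q1 - p1 <> 0) by lra; apply Rsqr_pos_lt in H0; unfold Rsqr in H0; nra).
    pose proof (pow2_ge_0 (q2-p2)); lra.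
Qed.


Lemma gl_facts s P Q : 0 < s -> n2 P < s^2 -> n2 Q < s^2 ->
  let w := madd s (mopp P) Q in
  s^2 - n2 w = s^2 * (s^2 - n2 P) * (s^2 - n2 Q) / Dm s (Copp P) Q /\
  n2 w = s^4 * ((fst Q - fst P)^2 + (snd Q - snd P)^2) / Dm s (Copp P) Q /\
  0 < Dm s (Copp P) Q.
Proof.
  intros Hs HP HQ w.
  assert (HP' : n2 (Copp P) < s^2) by (rewrite n2_opp; auto).
  pose proof (madd_n2 s (Copp P) Q Hs HP' HQ) as E. rewrite n2_opp in E.
  pose proof (Dm_pos s (Copp P) Q Hs HP' HQ) as D.
  split; [exact E|]. split; [|exact D].
  assert (n2 w = s^2 - s^2 * (s^2 - n2 P) * (s^2 - n2 Q) / Dm s (Copp P) Q) by (unfold w, mopp; lra).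
  rewrite H. destruct P as [p1 p2], Q as [q1 q2]. unfold Dm, n2, Copp in *; cbn [fst snd] in *.
  field. lra.
Qed.

Lemma vg_formula s P Q : 0 < s -> n2 P < s^2 -> n2 Q < s^2 ->
  vgamma s (gyrolength s P Q) ^2 * (4*(s^2-n2 P)^2*(s^2-n2 Q)^2) = s^2 * G (hv s P) (hv s Q).
Proof.
  intros Hs HP HQ. destruct (gl_facts s P Q Hs HP HQ) as [E1 [E2 D]].
  unfold gyrolength, vgamma.
  set (w := madd s (mopp P) Q) in *.
  assert (Hv : Cmod w ^ 2 = n2 w) by apply Cmod_sq.
  assert (Hne : 1 - Cmod w ^2 / s^2 <> 0).
  { rewrite Hv. assert (0 < s^2 - n2 w).
    { rewrite E1. apply Rdiv_lt_0_compat; auto. apply Rmult_lt_0_compat; [apply Rmult_lt_0_compat|]; nra. }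
    intro C0. assert (s^2 - n2 w = s^2 * (1 - n2 w / s^2)) by (field; lra). nra. }
  assert (Hx : forall a b, b <> 0 -> (a/b)^2 = a^2/b^2) by (intros; field; auto).
  rewrite Hx by auto.
  rewrite Hv. rewrite Hv in Hne. rewrite E2 in *. rewrite G_h.
  destruct P as [p1 p2], Q as [q1 q2]. unfold Dm, n2, Copp in *; cbn [fst snd] in *.
  assert (Ei : (s ^ 2 + (- p1 * q1 + - p2 * q2)) ^ 2 + (- p1 * q2 - - p2 * q1) ^ 2 -
    s ^ 2 * ((q1 - p1) ^ 2 + (q2 - p2) ^ 2) = (s^2 - (p1^2+p2^2)) * (s^2 - (q1^2+q2^2))) by ring.
  field. rewrite Ei. repeat split; try (apply Rgt_not_eq; lra).
  apply Rgt_not_eq. apply Rmult_lt_0_compat; lra.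
Qed.


Lemma vg_pos s P Q : 0 < s -> n2 P < s^2 -> n2 Q < s^2 -> P <> Q ->
  0 < vgamma s (gyrolength s P Q).
Proof.
  intros Hs HP HQ Hne. destruct (gl_facts s P Q Hs HP HQ) as [E1 [E2 D]].
  pose proof (diff_pos P Q Hne) as Hd.
  unfold gyrolength, vgamma. set (w := madd s (mopp P) Q) in *.
  assert (H1 : 0 < n2 w) by (rewrite E2; apply Rdiv_lt_0_compat; auto; apply Rmult_lt_0_compat; [apply pow_lt; lra | exact Hd]).
  assert (H2 : 0 < s^2 - n2 w).
  { rewrite E1. apply Rdiv_lt_0_compat; auto. apply Rmult_lt_0_compat; [apply Rmult_lt_0_compat|]; nra. }
  pose proof (Cmod_sq w) as Hv. pose proof (Cmod_ge_0 w) as Hv0.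
  assert (0 < Cmod w) by (destruct Hv0 as [|Hz]; auto; rewrite <- Hz in Hv; nra).
  apply Rdiv_lt_0_compat; auto.
  rewrite Hv. assert (1 - n2 w / s^2 = (s^2 - n2 w) / s^2) by (field; lra). rewrite H0.
  apply Rdiv_lt_0_compat; nra.
Qed.

Lemma tanh_sq x : Defs.tanh x ^ 2 < 1.
Proof.
  unfold Defs.tanh. pose proof (exp_pos x). pose proof (exp_pos (-x)).
  assert (Hx : forall a b, b <> 0 -> (a/b)^2 = a^2/b^2) by (intros; field; auto).
  rewrite Hx by (apply Rgt_not_eq; lra). apply Rmult_lt_reg_r with ((exp x + exp (- x)) ^ 2). apply pow_lt; lra.
  unfold Rdiv. rewrite Rmult_assoc, Rinv_l by (apply Rgt_not_eq; apply pow_lt; lra). pose proof (Rmult_lt_0_compat _ _ H H0). nra.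
Qed.

Lemma tanh_artanh y : -1 < y < 1 -> Defs.tanh (Defs.artanh y) = y.
Proof.
  intros Hy. unfold Defs.tanh, Defs.artanh.
  set (r := (1 + y) / (1 - y)).
  assert (Hr : 0 < r) by (unfold r; apply Rdiv_lt_0_compat; lra).
  set (e := exp (ln r / 2)).
  assert (He : 0 < e) by apply exp_pos.
  assert (He2 : e * e = r).
  { unfold e. rewrite <- exp_plus. replace (ln r / 2 + ln r / 2) with (ln r) by field.
    apply exp_ln; auto. }
  rewrite exp_Ropp. fold e.
  replace ((e - / e) / (e + / e)) with ((e*e - 1)/(e*e + 1)) by (field; split; lra).
  rewrite He2. unfold r. field. lra.
Qed.

Lemma artanh_pos y : 0 < y < 1 -> 0 < Defs.artanh y.
Proof.
  intros Hy. unfold Defs.artanh. apply Rdiv_lt_0_compat; [|lra].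
  rewrite <- ln_1. apply ln_increasing; [lra|].
  apply Rmult_lt_reg_r with (1 - y); [lra|]. unfold Rdiv. rewrite Rmult_assoc, Rinv_l; lra.
Qed.

Lemma mscal_form s t u : 0 < s ->
  exists k, mscal s t u = (k * fst u, k * snd u) /\ n2 (mscal s t u) < s^2.
Proof.
  intros Hs. unfold mscal. destruct (Req_EM_T (Cmod u) 0) as [H|H].
  - exists 0. unfold RtoC, n2; cbn [fst snd]. split; [f_equal; ring | nra].
  - set (c := s * Defs.tanh (t * Defs.artanh (Cmod u / s)) / Cmod u).
    exists c. unfold RtoC, Cmult, n2; cbn [fst snd]. split; [f_equal; ring|].
    pose proof (Cmod_sq u) as Hu. unfold n2 in Hu.
    pose proof (tanh_sq (t * Defs.artanh (Cmod u / s))).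
    replace ((c * fst u - 0 * snd u) ^ 2 + (c * snd u + 0 * fst u) ^ 2) with (c^2 * Cmod u ^2) by (rewrite Hu; ring).
    unfold c. replace ((s * Defs.tanh (t * Defs.artanh (Cmod u / s)) / Cmod u) ^ 2 * Cmod u ^ 2)
      with (s^2 * Defs.tanh (t * Defs.artanh (Cmod u / s)) ^2) by (field; auto).
    rewrite <- (Rmult_1_r (s^2)) at 2. apply Rmult_lt_compat_l; [apply pow_lt; lra | auto].
Qed.


Lemma hv_scal s k u : 0 < s ->
  hv s (k * fst u, k * snd u) =
  vlin ((s^2*(1-k) + n2 u * (k^2-k))/s^2) (hv s (0,0)) k (hv s u).
Proof. intros Hs. destruct u; vsimp; f_equal; [f_equal|]; field; lra. Qed.

Lemma pos_ne x : 0 < x -> x <> 0.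
Proof. intros; apply Rgt_not_eq; lra. Qed.

Lemma LA_hu s A B : 0 < s -> n2 A < s^2 -> n2 B < s^2 ->
  LA s A (hv s (madd s (mopp A) B)) =
  vsc (/ (Dm s (Copp A) B / s^2) * (s^2 - n2 A)^2) (hv s B).
Proof.
  intros Hs HA HB. unfold mopp.
  assert (HA' : n2 (Copp A) < s^2) by (rewrite n2_opp; auto).
  pose proof (transl s (Copp A) B Hs HA' HB) as T2.
  pose proof (Dm_pos s (Copp A) B Hs HA' HB) as D2.
  apply vsc_inv in T2; [|apply pos_ne; apply Rdiv_lt_0_compat; nra].
  rewrite T2, LA_vsc, LA_inv, vsc_vsc. reflexivity.
Qed.

Lemma fwd s A B X : 0 < s -> n2 A < s^2 -> n2 B < s^2 -> gyroline s A B X ->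
  n2 X < s^2 /\ exists a b, hv s X = vlin a (hv s A) b (hv s B).
Proof.
  intros Hs HA HB [t ->].
  assert (HA' : n2 (Copp A) < s^2) by (rewrite n2_opp; auto).
  set (u := madd s (mopp A) B).
  assert (Hu : n2 u < s^2) by (apply madd_in; auto).
  destruct (mscal_form s t u Hs) as [k [Hw Hwn]].
  set (w := mscal s t u) in *. rewrite Hw in Hwn |- *.
  split; [apply madd_in; auto|].
  pose proof (transl s A _ Hs HA Hwn) as T.
  pose proof (Dm_pos s A _ Hs HA Hwn) as D.
  rewrite hv_scal, LA_lin, LA_h0 in T by auto.
  unfold u in *. rewrite LA_hu in T by auto.
  rewrite vlin_vsc in T.
  apply vsc_inv in T; [|apply pos_ne; apply Rdiv_lt_0_compat; nra].
  rewrite vsc_vlin in T. eexists; eexists; exact T.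
Qed.


Lemma LAm_hP s P : 0 < s -> LA s (Copp P) (hv s P) = vsc (/ s^2 * (s^2 - n2 P)^2) (hv s (0,0)).
Proof.
  intros Hs. pose proof (LA_h0 s P) as E. symmetry in E.
  apply vsc_inv in E; [|apply pos_ne; apply pow_lt; lra].
  rewrite E, LA_vsc, LA_inv', vsc_vsc. reflexivity.
Qed.

Lemma bwd s P Q Y : 0 < s -> n2 P < s^2 -> n2 Q < s^2 -> n2 Y < s^2 -> P <> Q ->
  forall a b, hv s Y = vlin a (hv s P) b (hv s Q) -> gyroline s P Q Y.
Proof.
  intros Hs HP HQ HY Hne a b E.
  assert (HP' : n2 (Copp P) < s^2) by (rewrite n2_opp; auto).
  set (u := madd s (Copp P) Q).
  set (w := madd s (Copp P) Y).
  assert (Hu : n2 u < s^2) by (apply madd_in; auto).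
  assert (Hw : n2 w < s^2) by (apply madd_in; auto).
  pose proof (transl s (Copp P) Y Hs HP' HY) as TW.
  pose proof (transl s (Copp P) Q Hs HP' HQ) as TU.
  pose proof (Dm_pos s (Copp P) Y Hs HP' HY) as DW.
  pose proof (Dm_pos s (Copp P) Q Hs HP' HQ) as DU.
  fold w in TW. fold u in TU.
  rewrite E, LA_lin, LAm_hP, <- TU, vlin_vsc in TW by auto.
  apply vsc_inv in TW; [|apply pos_ne; apply Rdiv_lt_0_compat; nra].
  rewrite vsc_vlin in TW.
  set (be := / (Dm s (Copp P) Y / s ^ 2) * (b * (Dm s (Copp P) Q / s ^ 2))) in TW.
  assert (W1 : fst w = be * fst u /\ snd w = be * snd u).
  { destruct w as [w1 w2], u as [u1 u2]. unfold hv, vlin in TW; cbn [fst snd] in TW.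
    injection TW as T1 T2 T3. cbn [fst snd]. split; nra. }
  assert (Hu0 : n2 u <> 0).
  { intro Z. apply Hne.
    assert (Zu : u = (0,0)).
    { destruct u as [u1 u2]. unfold n2 in Z; cbn [fst snd] in Z. f_equal; nra. }
    rewrite Zu in TU. apply (f_equal (LA s P)) in TU.
    rewrite LA_vsc, LA_h0, LA_inv, vsc_vsc in TU.
    symmetry in TU. apply vsc_inv in TU; [|apply pos_ne; apply pow_lt; nra].
    rewrite vsc_vsc in TU. symmetry. exact (hv_inj s P Q _ Hs HP HQ TU). }
  pose proof (Cmod_sq u) as Cu.
  assert (Cpos : 0 < Cmod u).
  { destruct (Cmod_ge_0 u) as [|Z]; auto. exfalso. apply Hu0. rewrite <- Cu, <- Z. ring. }
  assert (Cs : Cmod u < s).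
  { destruct (Rlt_or_le (Cmod u) s); auto. nra. }
  assert (Bd : (be * Cmod u)^2 < s^2).
  { replace ((be * Cmod u)^2) with (n2 w); auto.
    unfold n2. destruct W1 as [-> ->]. rewrite (Rpow_mult_distr be (Cmod u)), Cu. unfold n2. ring. }
  assert (Bd' : -1 < be * Cmod u / s < 1).
  { split; [apply Rmult_lt_reg_r with s; auto; unfold Rdiv; rewrite Rmult_assoc, Rinv_l; nra
           |apply Rmult_lt_reg_r with s; auto; unfold Rdiv; rewrite Rmult_assoc, Rinv_l; nra]. }
  assert (Apos : 0 < Defs.artanh (Cmod u / s)).
  { apply artanh_pos. split; [apply Rdiv_lt_0_compat; auto|].
    apply Rmult_lt_reg_r with s; auto; unfold Rdiv; rewrite Rmult_assoc, Rinv_l; lra. }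
  exists (Defs.artanh (be * Cmod u / s) / Defs.artanh (Cmod u / s)).
  change (mopp P) with (Copp P).
  fold u.
  replace (mscal s (Defs.artanh (be * Cmod u / s) / Defs.artanh (Cmod u / s)) u) with w.
  { unfold w. symmetry. change (Copp P) with (mopp P). apply cancel_l; auto. }
  unfold mscal. destruct (Req_EM_T (Cmod u) 0) as [Z|_]; [lra|].
  replace (Defs.artanh (be * Cmod u / s) / Defs.artanh (Cmod u / s) * Defs.artanh (Cmod u / s))
    with (Defs.artanh (be * Cmod u / s)) by (field; lra).
  rewrite tanh_artanh by auto.
  replace (s * (be * Cmod u / s) / Cmod u) with be by (field; lra).
  destruct W1 as [W1 W2]. destruct w as [w1 w2], u as [u1 u2].
  unfold RtoC, Cmult; cbn [fst snd] in *. f_equal; nra.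
Qed.


Definition cross (x y : V3) : V3 :=
  let x1 := fst (fst x) in let x2 := snd (fst x) in let x3 := snd x in
  let y1 := fst (fst y) in let y2 := snd (fst y) in let y3 := snd y in
  (x2*y3 - x3*y2, x3*y1 - x1*y3, x1*y2 - x2*y1).
Definition dot (x y : V3) : R :=
  fst (fst x) * fst (fst y) + snd (fst x) * snd (fst y) + snd x * snd y.


Lemma decomp p q v : let n := cross p q in
  vsc (dot n n) v =
  (fst (fst (vlin (dot (cross v q) n) p (dot (cross p v) n) q)) + dot v n * fst (fst n),
   snd (fst (vlin (dot (cross v q) n) p (dot (cross p v) n) q)) + dot v n * snd (fst n),
   snd (vlin (dot (cross v q) n) p (dot (cross p v) n) q) + dot v n * snd n).
Proof. cbv zeta. v3 p; v3 q; v3 v; unfold cross, dot, vlin, vsc; cbv beta zeta; cbn [fst snd]; f_equal; [f_equal|]; ring. Qed.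

Lemma G_cross p q : G p q = (fst (fst (cross p q)))^2 + (snd (fst (cross p q)))^2 - (snd (cross p q))^2.
Proof. v3 p; v3 q; unfold G, mk, cross; cbv beta zeta; cbn [fst snd]; ring. Qed.


Lemma dot_lin n a x b y : dot n (vlin a x b y) = a * dot n x + b * dot n y.
Proof. v3 n; v3 x; v3 y; unfold dot; vsimp; ring. Qed.
Lemma dot_span p q a b : dot (cross p q) (vlin a p b q) = 0.
Proof. v3 p; v3 q; unfold dot, cross, vlin; cbv beta zeta; cbn [fst snd]; ring. Qed.
Lemma dot_comm x y : dot x y = dot y x.
Proof. v3 x; v3 y; unfold dot; cbn [fst snd]; ring. Qed.

Lemma G_pos s P Q : 0 < s -> n2 P < s^2 -> n2 Q < s^2 -> P <> Q -> 0 < G (hv s P) (hv s Q).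
Proof.
  intros Hs HP HQ Hne. rewrite G_h.
  assert (HP' : n2 (Copp P) < s^2) by (rewrite n2_opp; auto).
  pose proof (Dm_pos s (Copp P) Q Hs HP' HQ) as D.
  pose proof (diff_pos P Q Hne).
  replace ((s ^ 2 - (fst P * fst Q + snd P * snd Q)) ^ 2 + (fst P * snd Q - snd P * fst Q) ^ 2)
    with (Dm s (Copp P) Q) by (destruct P, Q; unfold Dm, Copp; cbn [fst snd]; ring).
  apply Rmult_lt_0_compat; auto. apply Rmult_lt_0_compat; auto.
  apply Rmult_lt_0_compat; [lra | apply pow_lt; lra].
Qed.

Lemma on_line s P Q Y : 0 < s -> n2 P < s^2 -> n2 Q < s^2 -> gyroline s P Q Y ->
  n2 Y < s^2 /\ dot (cross (hv s P) (hv s Q)) (hv s Y) = 0.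
Proof.
  intros Hs HP HQ HY. destruct (fwd s P Q Y Hs HP HQ HY) as [HYn [a [b E]]].
  split; auto. rewrite E. apply dot_span.
Qed.

Lemma off_line s P Q A : 0 < s -> n2 P < s^2 -> n2 Q < s^2 -> n2 A < s^2 -> P <> Q ->
  ~ gyroline s P Q A -> dot (cross (hv s P) (hv s Q)) (hv s A) <> 0.
Proof.
  intros Hs HP HQ HA Hne Hoff Z. apply Hoff.
  pose proof (G_pos s P Q Hs HP HQ Hne) as HG.
  set (p := hv s P) in *. set (q := hv s Q) in *. set (n := cross p q) in *.
  assert (Hnn : 0 < dot n n).
  { rewrite G_cross in HG. fold n in HG. unfold dot.
    pose proof (pow2_ge_0 (snd n)). nra. }
  pose proof (decomp p q (hv s A)) as Dc. cbv zeta in Dc. fold n in Dc.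
  rewrite dot_comm in Z. rewrite Z in Dc.
  assert (E : vsc (dot n n) (hv s A) = vlin (dot (cross (hv s A) q) n) p (dot (cross p (hv s A)) n) q).
  { rewrite Dc. unfold vlin; cbn [fst snd]. f_equal; [f_equal|]; ring. }
  apply vsc_inv in E; [|apply pos_ne; auto].
  rewrite vsc_vlin in E.
  exact (bwd s P Q A Hs HP HQ HA Hne _ _ E).
Qed.


Lemma ratio_gen x y a b na nb nx K : 0 < x -> 0 < y -> na <> 0 -> nb <> 0 -> nx <> 0 -> K <> 0 ->
  x^2 * (4*na^2*nx^2) = K * b^2 -> y^2 * (4*nb^2*nx^2) = K * a^2 ->
  (x/y)^2 * a^2 * na^2 = b^2 * nb^2.
Proof.
  intros Hx Hy Ha Hb Hn HK E1 E2.
  assert (Ea : a^2 = y^2 * (4*nb^2*nx^2) / K) by (rewrite E2; field; auto).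
  assert (Eb : b^2 = x^2 * (4*na^2*nx^2) / K) by (rewrite E1; field; auto).
  rewrite Ea, Eb. field. repeat split; auto; apply pos_ne; auto.
Qed.

Lemma final r1 r2 r3 r4 a1 a2 a3 a4 b1 b2 b3 b4 na nb nc nd pa pb pc pd :
  0 < r1 -> 0 < r2 -> 0 < r3 -> 0 < r4 ->
  na <> 0 -> nb <> 0 -> nc <> 0 -> nd <> 0 ->
  pa <> 0 -> pb <> 0 -> pc <> 0 -> pd <> 0 ->
  a1 <> 0 -> a2 <> 0 -> a3 <> 0 -> a4 <> 0 ->
  r1^2 * a1^2 * na^2 = b1^2 * nb^2 -> r2^2 * a2^2 * nb^2 = b2^2 * nc^2 ->
  r3^2 * a3^2 * nc^2 = b3^2 * nd^2 -> r4^2 * a4^2 * nd^2 = b4^2 * na^2 ->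
  a1 * pa + b1 * pb = 0 -> a2 * pb + b2 * pc = 0 ->
  a3 * pc + b3 * pd = 0 -> a4 * pd + b4 * pa = 0 ->
  r1 * r2 * r3 * r4 = 1.
Proof.
  intros h1 h2 h3 h4 n1 n2 n3 n4 q1 q2 q3 q4 z1 z2 z3 z4 E1 E2 E3 E4 L1 L2 L3 L4.
  assert (M : (r1*r2*r3*r4)^2 * ((a1*a2*a3*a4)^2 * (na*nb*nc*nd)^2)
              = (b1*b2*b3*b4)^2 * (na*nb*nc*nd)^2).
  { replace ((r1*r2*r3*r4)^2 * ((a1*a2*a3*a4)^2 * (na*nb*nc*nd)^2)) with
      ((r1^2 * a1^2 * na^2) * (r2^2 * a2^2 * nb^2) * (r3^2 * a3^2 * nc^2) * (r4^2 * a4^2 * nd^2)) by ring.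
    rewrite E1, E2, E3, E4. ring. }
  assert (Bp : b1*b2*b3*b4 = a1*a2*a3*a4).
  { assert (Pp : pa*pb*pc*pd <> 0) by (repeat (apply Rmult_integral_contrapositive; split); auto).
    apply (Rmult_eq_reg_r (pa*pb*pc*pd)); auto.
    replace (b1*b2*b3*b4*(pa*pb*pc*pd)) with ((b1*pb)*(b2*pc)*(b3*pd)*(b4*pa)) by ring.
    replace (b1*pb) with (-(a1*pa)) by lra. replace (b2*pc) with (-(a2*pb)) by lra.
    replace (b3*pd) with (-(a3*pc)) by lra. replace (b4*pa) with (-(a4*pd)) by lra. ring. }
  rewrite Bp in M.
  assert (Hnz : (a1*a2*a3*a4)^2 * (na*nb*nc*nd)^2 <> 0).
  { apply Rmult_integral_contrapositive; split; apply pow_nonzero;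
    repeat (apply Rmult_integral_contrapositive; split); auto. }
  assert (S : (r1*r2*r3*r4)^2 = 1).
  { apply (Rmult_eq_reg_r _ _ _ (eq_trans M (eq_sym (Rmult_1_l _))) Hnz). }
  assert (Hp : 0 < r1*r2*r3*r4) by (repeat apply Rmult_lt_0_compat; auto).
  clear - S Hp. set (r := r1*r2*r3*r4) in *. nra.
Qed.


Lemma side_ratio s P Q A B X :
  0 < s -> n2 P < s^2 -> n2 Q < s^2 -> n2 A < s^2 -> n2 B < s^2 -> P <> Q ->
  ~ gyroline s P Q A -> ~ gyroline s P Q B ->
  gyroline s P Q X -> gyroline s A B X ->
  exists a b, a <> 0 /\
    a * dot (cross (hv s P) (hv s Q)) (hv s A) + b * dot (cross (hv s P) (hv s Q)) (hv s B) = 0 /\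
    0 < vgamma s (gyrolength s A X) / vgamma s (gyrolength s B X) /\
    (vgamma s (gyrolength s A X) / vgamma s (gyrolength s B X))^2 * a^2 * (s^2 - n2 A)^2
      = b^2 * (s^2 - n2 B)^2.
Proof.
  intros Hs HP HQ HA HB Hne nA nB Xl XAB.
  destruct (on_line s P Q X Hs HP HQ Xl) as [HX Z].
  destruct (fwd s A B X Hs HA HB XAB) as [_ [a [b E]]].
  assert (AX : A <> X) by (intro e; subst; auto).
  assert (BX : B <> X) by (intro e; subst; auto).
  pose proof (G_pos s A X Hs HA HX AX) as G1.
  pose proof (G_pos s B X Hs HB HX BX) as G2.
  rewrite E in G1, G2. rewrite G_lin_r in G1. rewrite G_lin_l in G2.
  assert (Gn : G (hv s A) (hv s B) <> 0) by (intro e; rewrite e in G1; lra).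
  exists a, b. split; [intro e; rewrite e in G2; lra|].
  split. { rewrite E, dot_lin in Z. exact Z. }
  pose proof (vg_pos s A X Hs HA HX AX) as V1.
  pose proof (vg_pos s B X Hs HB HX BX) as V2.
  split; [apply Rdiv_lt_0_compat; auto|].
  pose proof (vg_formula s A X Hs HA HX) as F1.
  pose proof (vg_formula s B X Hs HB HX) as F2.
  rewrite E, G_lin_r in F1. rewrite E, G_lin_l in F2.
  apply (ratio_gen _ _ _ _ _ _ (s^2 - n2 X) (s^2 * G (hv s A) (hv s B))); auto;
    try (apply pos_ne; lra).
  - apply Rmult_integral_contrapositive; split; auto. apply pos_ne; apply pow_lt; lra.
  - rewrite F1. ring.
  - rewrite F2. ring.
Qed.

Theorem theorem3 (s : R) (A B C D P Q X Y Z W : C) :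
  0 < s ->
  gyroquadrilateral s A B C D ->
  (* l = gyroline P Q is a gyroline of V_s *)
  in_Vs s P -> in_Vs s Q -> P <> Q ->
  (* l passes through none of A, B, C, D *)
  ~ gyroline s P Q A -> ~ gyroline s P Q B ->
  ~ gyroline s P Q C -> ~ gyroline s P Q D ->
  (* l meets AB at X, BC at Y, CD at Z, DA at W *)
  gyroline s P Q X -> gyroline s A B X ->
  gyroline s P Q Y -> gyroline s B C Y ->
  gyroline s P Q Z -> gyroline s C D Z ->
  gyroline s P Q W -> gyroline s D A W ->
  vgamma s (gyrolength s A X) / vgamma s (gyrolength s B X) *
  (vgamma s (gyrolength s B Y) / vgamma s (gyrolength s C Y)) *
  (vgamma s (gyrolength s C Z) / vgamma s (gyrolength s D Z)) *
  (vgamma s (gyrolength s D W) / vgamma s (gyrolength s A W)) = 1.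
Proof.
  intros Hs [HA [HB [HC [HD _]]]] HP HQ Hne nA nB nC nD X1 X2 Y1 Y2 Z1 Z2 W1 W2.
  rewrite in_Vs_iff in HA, HB, HC, HD, HP, HQ by auto.
  destruct (side_ratio s P Q A B X Hs HP HQ HA HB Hne nA nB X1 X2) as [a1 [b1 [z1 [L1 [R1 E1]]]]].
  destruct (side_ratio s P Q B C Y Hs HP HQ HB HC Hne nB nC Y1 Y2) as [a2 [b2 [z2 [L2 [R2 E2]]]]].
  destruct (side_ratio s P Q C D Z Hs HP HQ HC HD Hne nC nD Z1 Z2) as [a3 [b3 [z3 [L3 [R3 E3]]]]].
  destruct (side_ratio s P Q D A W Hs HP HQ HD HA Hne nD nA W1 W2) as [a4 [b4 [z4 [L4 [R4 E4]]]]].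
  pose proof (off_line s P Q A Hs HP HQ HA Hne nA) as pa.
  pose proof (off_line s P Q B Hs HP HQ HB Hne nB) as pb.
  pose proof (off_line s P Q C Hs HP HQ HC Hne nC) as pc.
  pose proof (off_line s P Q D Hs HP HQ HD Hne nD) as pd.
  apply (final _ _ _ _ a1 a2 a3 a4 b1 b2 b3 b4 (s^2 - n2 A) (s^2 - n2 B) (s^2 - n2 C) (s^2 - n2 D)
     (dot (cross (hv s P) (hv s Q)) (hv s A)) (dot (cross (hv s P) (hv s Q)) (hv s B))
     (dot (cross (hv s P) (hv s Q)) (hv s C)) (dot (cross (hv s P) (hv s Q)) (hv s D)) R1 R2 R3 R4); auto; apply pos_ne; lra.
Qed.
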